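(* If $\gcd(A^3,B^2)=S(x,y)$, then $\gcd(f^3,g^2)=S(t,1)$.
   Context: Fix $\upsilon\in\{1,2\}$ and positive integers $m,\tau$ with $m=1$ or $\upsilon\tau=1$. Let $f,g\in\mathbb{Z}[t]$ with $4f^3+27g^2\ne0$, no common real root, and $\max\{\frac12\deg f,\frac13\deg g\}=\frac{2m}{\upsilon\tau}$. Let $\varsigma=2m$ if $\upsilon=1$, $\varsigma=1$ if $\upsilon=2$; $A(x,y)=y^{2\varsigma}f(x/y^\tau)$, $B(x,y)=y^{3\varsigma}g(x/y^\tau)\in\mathbb{Z}[x,y]$. For polynomials $F,G$ (in any number of variables), $\gcd(F,G)$ denotes the polynomial with integer coefficients, of highest possible degree and smallest possible positive leading coefficient (in lexicographic ordering), dividing both $F$ and $G$ in the polynomial ring over $\mathbb{Q}$. *)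

(* Defs.v *)
From HB Require Import structures.
From mathcomp Require Import all_boot all_order all_algebra.
From mathcomp Require Import Rstruct.
Set Implicit Arguments. Unset Strict Implicit. Unset Printing Implicit Defensive.
Import Order.TTheory GRing.Theory Num.Theory.
Local Open Scope ring_scope.

(* Bivariate polynomials in Z[x,y] are represented as {poly {poly int}}:
   the outer variable 'X is x, the inner variable ('X)%:P is y. *)

Definition polyQ (p : {poly int}) : {poly rat} := map_poly (fun z : int => z%:~R) p.
Definition poly2Q (P : {poly {poly int}}) : {poly {poly rat}} := map_poly polyQ P.

Definition dvd2 (D P : {poly {poly int}}) : Prop :=
  exists Q : {poly {poly rat}}, poly2Q P = Q * poly2Q D.

(* total degree of a bivariate polynomial (0 for the zero polynomial) *)
Definition totdeg2 (P : {poly {poly int}}) : nat :=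
  \max_(i < size P) (if nth (0%R : {poly int}) P i == 0%R then 0%N else (i + (size (nth (0%R : {poly int}) P i)).-1)%N).

(* leading coefficient for the lexicographic order with x > y *)
Definition lead2 (P : {poly {poly int}}) : int := lead_coef (lead_coef P).

Definition is_gcd2 (F G S : {poly {poly int}}) : Prop :=
  [/\ dvd2 S F, dvd2 S G,
      (forall D, dvd2 D F -> dvd2 D G -> (totdeg2 D <= totdeg2 S)%N),
      0 < lead2 S &
      (forall D, dvd2 D F -> dvd2 D G -> totdeg2 D = totdeg2 S ->
         0 < lead2 D -> lead2 S <= lead2 D)].

Definition is_gcd1 (F G s : {poly int}) : Prop :=
  [/\ polyQ s %| polyQ F, polyQ s %| polyQ G,
      (forall d, polyQ d %| polyQ F -> polyQ d %| polyQ G -> (size d <= size s)%N),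
      0 < lead_coef s &
      (forall d, polyQ d %| polyQ F -> polyQ d %| polyQ G -> size d = size s ->
         0 < lead_coef d -> lead_coef s <= lead_coef d)].

(* weighted homogenisation: y^w * p(x / y^tau) = sum_i p_i x^i y^(w - tau*i)
   (exact whenever tau * deg p <= w, which the hypotheses guarantee) *)
Definition homog (p : {poly int}) (tau w : nat) : {poly {poly int}} :=
  \sum_(i < size p) (p`_i *: 'X^(w - tau * i))%:P * 'X^i.

(* S(t,1) : specialise y := 1, x := t *)
Definition at_y1 (S : {poly {poly int}}) : {poly int} := map_poly (fun c => c.[1]) S.

Definition varsigma (ups m : nat) : nat := if ups == 1%N then (2 * m)%N else 1%N.

(* Main.v *)
Require Import Defs.
From HB Require Import structures.
From mathcomp Require Import all_boot all_order all_algebra.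
From mathcomp Require Import Rstruct.
From mathcomp Require Import zify.
Import Order.TTheory GRing.Theory Num.Theory.
Local Open Scope ring_scope.
Set Implicit Arguments. Unset Strict Implicit.

Section Phi.
Variable R : comNzRingType.
Implicit Types (P Q : {poly {poly R}}) (p q : {poly R}).

Definition phi (k : nat) P : {poly {poly R}} := P \Po ('X * ('X^k)%:P).

Lemma phi_poly k P : phi k P = \poly_(i < size P) (P`_i * 'X^(k * i)).
Proof.
rewrite /phi comp_polyE poly_def; apply: eq_bigr => i _.
by rewrite exprMn -rmorphXn -exprM mulrC mul_polyC scalerA.
Qed.

Lemma coef_phi k P i : (phi k P)`_i = P`_i * 'X^(k * i).
Proof.
rewrite phi_poly coef_poly; case: ltnP => // hi.
by rewrite nth_default // mul0r.
Qed.

Lemma phiM k P Q : phi k (P * Q) = phi k P * phi k Q.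
Proof. exact: comp_polyM. Qed.

Lemma phiXn k P n : phi k (P ^+ n) = phi k P ^+ n.
Proof. by elim: n => [|n IH]; rewrite ?expr0 ?exprS ?phiM ?IH // /phi comp_polyC. Qed.

Definition homQ p tau w : {poly {poly R}} :=
  \sum_(i < size p) (p`_i *: 'X^(w - tau * i))%:P * 'X^i.

Lemma homQ_poly p tau w : homQ p tau w = \poly_(i < size p) (p`_i *: 'X^(w - tau * i)).
Proof. by rewrite /homQ poly_def; apply: eq_bigr => i _; rewrite mul_polyC. Qed.

Lemma coef_homQ p tau w i : (homQ p tau w)`_i = p`_i *: 'X^(w - tau * i).
Proof.
rewrite homQ_poly coef_poly; case: ltnP => // hi.
by rewrite nth_default // scale0r.
Qed.

Lemma phi_homQ p tau w : (tau * (size p).-1 <= w)%N ->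
  phi tau (homQ p tau w) = ('X^w)%:P * p^:P.
Proof.
move=> hw; apply/polyP => i.
rewrite coef_phi coef_homQ coefCM coef_map /=.
have [hi|hi] := ltnP i (size p).
  rewrite -scalerAl -exprD subnK; last first.
    apply: leq_trans hw; rewrite leq_mul2l; apply/orP; right.
    by rewrite -ltnS prednK // (leq_ltn_trans _ hi).
  by rewrite mulrC mul_polyC.
by rewrite nth_default // scale0r mul0r polyC0 mulr0.
Qed.

Definition ev1 P : {poly R} := map_poly (horner_eval 1) P.

Lemma ev1M P Q : ev1 (P * Q) = ev1 P * ev1 Q.
Proof. by rewrite /ev1 rmorphM. Qed.

Lemma ev1_phi k P : ev1 (phi k P) = ev1 P.
Proof.
apply/polyP => i; rewrite /ev1 !coef_map /= coef_phi /horner_eval.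
by rewrite hornerM hornerXn expr1n mulr1.
Qed.

Lemma ev1_mono w p : ev1 (('X^w)%:P * p^:P) = p.
Proof.
apply/polyP => i; rewrite /ev1 coef_map coefCM coef_map /= /horner_eval.
by rewrite hornerM hornerXn expr1n mul1r hornerC.
Qed.

End Phi.

Section PhiDom.
Variable R : idomainType.
Implicit Types (P Q : {poly {poly R}}) (p q : {poly R}).

Lemma phi_inj k : injective (@phi R k).
Proof.
move=> P Q h; apply/polyP => i; have := congr1 (fun u : {poly {poly R}} => u`_i) h.
rewrite /= !coef_phi; apply: mulIf; by rewrite expf_neq0 // polyX_eq0.
Qed.

Lemma size_phi k P : size (phi k P) = size P.
Proof.
rewrite phi_poly; case: (posnP (size P)) => [/eqP|hs].
  by rewrite size_poly_eq0 => /eqP ->; rewrite size_poly0 poly_def big_ord0 size_poly0.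
apply: size_poly_eq; rewrite mulf_neq0 //; last by rewrite expf_neq0 // polyX_eq0.
by rewrite -lead_coefE lead_coef_eq0 -size_poly_eq0 -lt0n.
Qed.

End PhiDom.

Section Mono.
Variable R : idomainType.
Implicit Types (P T : {poly {poly R}}).

Lemma swapXYM (u v : {poly {poly R}}) : swapXY (u * v) = swapXY u * swapXY v.
Proof. exact: rmorphM. Qed.

Lemma swapXYXn (u : {poly {poly R}}) n : swapXY (u ^+ n) = swapXY u ^+ n.
Proof. exact: rmorphXn. Qed.

Lemma mono_factor n : forall (a b : {poly R}) c, c != 0 -> a * b = c *: 'X^n ->
  exists k ca, a = ca *: 'X^k.
Proof.
elim: n => [|n IH] a b c c0 h.
  have a0 : a != 0 by apply: contraNneq c0 => a0; move: h; rewrite a0 mul0r expr0 alg_polyC => /eqP; rewrite eq_sym polyC_eq0.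
  have b0 : b != 0 by apply: contraNneq c0 => b0; move: h; rewrite b0 mulr0 expr0 alg_polyC => /eqP; rewrite eq_sym polyC_eq0.
  have : size (a * b) = size (c *: 'X^0 : {poly R}) by rewrite h.
  rewrite size_mul // expr0 alg_polyC size_polyC c0 => hs.
  exists 0%N, a`_0; rewrite expr0 alg_polyC; apply: size1_polyC.
  move: hs a0 b0; rewrite -!size_poly_eq0; lia.
have : (a * b).[0] = (c *: 'X^(n.+1)).[0] by rewrite h.
rewrite /= hornerM hornerZ hornerXn expr0n /= mulr0.
move/eqP; rewrite mulf_eq0 => /orP [] /eqP h0.
  have /factor_theorem [a' ha'] : root a 0 by rewrite rootE h0.
  move: h; rewrite ha' subr0 mulrAC exprSr scalerAl => /mulIf.
  rewrite polyX_eq0 => /(_ isT) /IH [] // k [ca ->].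
  by exists k.+1, ca; rewrite exprSr scalerAl.
have /factor_theorem [b' hb'] : root b 0 by rewrite rootE h0.
move: h; rewrite hb' subr0 mulrA exprSr scalerAl => /mulIf.
rewrite polyX_eq0 => /(_ isT) /IH; exact.
Qed.

Definition totdegQ (P : {poly {poly R}}) : nat :=
  \max_(i < size P) (if nth 0%R P i == 0%R then 0%N else addn i (size (nth 0%R P i)).-1).

Lemma totdegQ_sizeY P : totdegQ P = (sizeY (phi 1 P)).-1.
Proof.
rewrite /sizeY size_phi.
rewrite (big_morph predn (id1 := 0%N) (op1 := maxn)) //; last first.
  by move=> x y; rewrite /maxn; case: ltnP => h; case: ltnP => h'; lia.
apply: eq_bigr => i _; rewrite coef_phi mul1n.
have [->|h] := eqVneq P`_i 0; first by rewrite mul0r size_poly0.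
have hs: leq 1 (size P`_i) by rewrite lt0n size_poly_eq0.
rewrite size_mulXn // -[in RHS](prednK hs) addnS /=.
by [].
Qed.

Lemma sizeY_mul (u v : {poly {poly R}}) : u != 0 -> v != 0 ->
  sizeY (u * v) = (sizeY u + sizeY v).-1.
Proof.
move=> u0 v0; rewrite !sizeYE rmorphM size_mul // swapXY_eq0 //.
Qed.

Lemma totdegQ_mul P T : P != 0 -> T != 0 -> totdegQ (P * T) = (totdegQ P + totdegQ T)%N.
Proof.
move=> P0 T0; rewrite !totdegQ_sizeY phiM sizeY_mul; last first.
- by rewrite -size_poly_eq0 size_phi size_poly_eq0.
- by rewrite -size_poly_eq0 size_phi size_poly_eq0.
have : sizeY (phi 1 P) != 0%N by rewrite sizeY_eq0 -size_poly_eq0 size_phi size_poly_eq0.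
have : sizeY (phi 1 T) != 0%N by rewrite sizeY_eq0 -size_poly_eq0 size_phi size_poly_eq0.
case: (sizeY (phi 1 P)) => // a; case: (sizeY (phi 1 T)) => // b _ _ /=.
by rewrite addnS.
Qed.

Lemma totdegQ_lb P : ((size P).-1 <= totdegQ P)%N.
Proof.
have [->|P0] := eqVneq P 0; first by rewrite size_poly0.
have hs : ((size P).-1 < size P)%N by rewrite prednK // lt0n size_poly_eq0.
apply: leq_trans (leq_bigmax (Ordinal hs)) => /=.
by rewrite -lead_coefE lead_coef_eq0 (negbTE P0) leq_addr.
Qed.

End Mono.

Section RatL.
Local Notation RP := {poly {poly rat}}.
Implicit Types (X P Q Qq : RP) (p q a d r : {poly rat}).

Lemma phi0 k : phi k (0 : RP) = 0.
Proof. exact: comp_poly0. Qed.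

Lemma size_mono w p : size (('X^w)%:P * p^:P : RP) = size p.
Proof. by rewrite size_Cmul ?size_map_polyC // -size_poly_eq0 size_polyXn. Qed.

Lemma size_homQ p t w : (t * (size p).-1 <= w)%N -> size (homQ p t w) = size p.
Proof. by move=> h; rewrite -(size_phi t) phi_homQ // size_mono. Qed.

Lemma lead2_homQ p t : lead_coef (lead_coef (homQ p t (t * (size p).-1))) = lead_coef p.
Proof.
by rewrite [lead_coef (homQ _ _ _)]lead_coefE size_homQ // coef_homQ subnn expr0 alg_polyC lead_coefC -lead_coefE.
Qed.

Lemma mono_mul w1 w2 p q :
  (('X^w1)%:P * p^:P) * (('X^w2)%:P * q^:P) = ('X^(w1 + w2))%:P * (p * q)^:P :> RP.
Proof. by rewrite mulrACA -polyCM -exprD rmorphM. Qed.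

Lemma dvd_hom t X a d W : phi t X = ('X^W)%:P * a^:P -> (t * (size a).-1 <= W)%N ->
  d %| a -> a != 0 ->
  exists r, [/\ a = r * d, r != 0, (t * (size r).-1 <= W - t * (size d).-1)%N &
    X = homQ r t (W - t * (size d).-1) * homQ d t (t * (size d).-1)].
Proof.
move=> hX hW hd a0; exists (a %/ d).
have ha : a = a %/ d * d by rewrite divpK.
move: ha; set r := a %/ d => ha.
have d0 : d != 0 by apply: contraNneq a0 => d0; rewrite ha d0 mulr0.
have r0 : r != 0 by apply: contraNneq a0 => r0; rewrite ha r0 mul0r.
have hs : size a = (size r + size d).-1 by rewrite {1}ha size_mul.
have hr : (t * (size r).-1 + t * (size d).-1 <= W)%N.
  rewrite -mulnDr; apply: leq_trans hW; rewrite leq_mul2l hs.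
  move: d0 r0; rewrite -!size_poly_eq0; case: (size d) => // n1; case: (size r) => // n2 _ _.
  by rewrite /= addnS /= leqnn orbT.
have hb : (t * (size r).-1 <= W - t * (size d).-1)%N.
  rewrite leq_subRL; first by rewrite addnC.
  exact: leq_trans (leq_addl _ _) hr.
split=> //.
apply: (@phi_inj _ t); rewrite phiM (phi_homQ (p:=d)) // (phi_homQ (p:=r)) //.
rewrite hX mono_mul subnK ?(leq_trans _ hr) ?leq_addl // -ha //.
Qed.

Definition ev0 P : {poly rat} := map_poly (horner_eval 0) P.

Lemma ev0M P Q : ev0 (P * Q) = ev0 P * ev0 Q.
Proof. by rewrite /ev0 rmorphM. Qed.

Lemma ev0_homQ_neq0 p t : p != 0 -> ev0 (homQ p t (t * (size p).-1)) != 0.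
Proof.
move=> p0; apply/eqP => h.
have := congr1 (fun u : {poly rat} => u`_(size p).-1) h.
rewrite /ev0 coef_map /= coef_homQ subnn expr0 alg_polyC /horner_eval hornerC coef0 -lead_coefE.
by move/eqP; rewrite lead_coef_eq0 (negbTE p0).
Qed.

Lemma ev0_homQ_big p t k : (t * (size p).-1 < k)%N -> ev0 (homQ p t k) = 0.
Proof.
move=> hk; apply/polyP => i; rewrite /ev0 coef_map /= coef_homQ coef0 /horner_eval.
have [hi|hi] := ltnP i (size p); last by rewrite nth_default // scale0r horner0.
rewrite hornerZ hornerXn expr0n /=.
have -> : (k - t * i == 0)%N = false.
  apply/negbTE; rewrite subn_eq0 -ltnNge; apply: leq_ltn_trans hk.
  by rewrite leq_mul2l -ltnS prednK ?hi ?orbT // (leq_ltn_trans _ hi).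
by rewrite mulr0.
Qed.

Lemma S_struct t X (S' : RP) Qq a W : phi t X = ('X^W)%:P * a^:P -> a != 0 -> X = Qq * S' ->
  ev0 X != 0 -> S' = homQ (ev1 S') t (t * (size (ev1 S')).-1).
Proof.
move=> hX a0 hQ h0.
have hm : swapXY (phi t S') * swapXY (phi t Qq) = a *: 'X^W.
  rewrite -swapXYM mulrC -phiM -hQ hX swapXYM swapXY_polyC swapXY_map_polyC map_polyXn.
  by rewrite mulrC mul_polyC.
have [k [ca hca]] := mono_factor a0 hm.
have hS : phi t S' = ('X^k)%:P * ca^:P.
  rewrite -[phi t S']swapXYK hca -mul_polyC swapXYM swapXY_polyC swapXYXn swapXY_X.
  by rewrite -rmorphXn mulrC.
have hca' : ca = ev1 S' by rewrite -(ev1_phi t) hS ev1_mono.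
move: hS; rewrite hca'; set s := ev1 S' => hS.
have S0 : S' != 0 by apply: contraNneq h0 => S0; rewrite hQ S0 mulr0 /ev0 map_poly0.
have s0 : s != 0.
  apply: contraNneq S0 => s0; apply/eqP; apply: (@phi_inj _ t); rewrite hS s0 phi0.
  by rewrite map_poly0 mulr0.
set n := (size s).-1.
have hkn : (t * n <= k)%N.
  have := congr1 (fun u : RP => u`_n) hS; rewrite /= coef_phi coefCM coef_map /=.
  have [->|Sn0] := eqVneq S'`_n 0.
    by rewrite mul0r => /esym /eqP; rewrite mulf_eq0 polyC_eq0 -lead_coefE lead_coef_eq0 (negbTE s0) orbF -size_poly_eq0 size_polyXn.
  move=> e; have : size (S'`_n * 'X^(t * n)) = size ('X^k * (s`_n)%:P : {poly rat}) by rewrite e.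
  rewrite size_mulXn // mulrC mul_polyC size_scale ?size_polyXn; last first.
    by rewrite -lead_coefE lead_coef_eq0.
  move: Sn0; rewrite -size_poly_eq0; case: (size (S'`_n)) => // x _; lia.
have hk : k = (t * n)%N.
  apply/eqP; rewrite eqn_leq hkn andbT leqNgt; apply/negP => hlt.
  have : S' = homQ s t k by apply: (@phi_inj _ t); rewrite hS phi_homQ // ltnW.
  move=> e; move: h0; rewrite hQ ev0M e ev0_homQ_big // mulr0 eqxx //.
apply: (@phi_inj _ t); rewrite hS phi_homQ // hk //.
Qed.

End RatL.


Lemma frac_le (x c N K : nat) : (0 < c)%N -> (0 < K)%N ->
  (x%:R / c%:R <= N%:R / K%:R :> rat) = (x * K <= N * c)%N.
Proof.
move=> c0 K0.
rewrite ler_pdivrMr ?ltr0n // mulrAC ler_pdivlMr ?ltr0n // -!natrM ler_nat.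
by [].
Qed.

Lemma frac_eq (x c N K : nat) : (0 < c)%N -> (0 < K)%N ->
  (x%:R / c%:R = N%:R / K%:R :> rat) -> (x * K = N * c)%N.
Proof.
move=> c0 K0 /eqP; rewrite eqr_div ?pnatr_eq0 -?lt0n // -!natrM eqr_nat => /eqP //.
Qed.

Lemma deg_facts ups m tau (f g : {poly int}) :
  (ups = 1 \/ ups = 2)%N -> (0 < m)%N -> (0 < tau)%N -> (m = 1 \/ ups * tau = 1)%N ->
  Num.max ((size f).-1%:R / 2 : rat) ((size g).-1%:R / 3) = (2 * m)%:R / (ups * tau)%:R ->
  [/\ (tau * (size f).-1 <= 2 * varsigma ups m)%N, (tau * (size g).-1 <= 3 * varsigma ups m)%N &
     ((tau * (size f).-1 = 2 * varsigma ups m)%N /\ (0 < (size f).-1)%N \/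
      (tau * (size g).-1 = 3 * varsigma ups m)%N /\ (0 < (size g).-1)%N)].
Proof.
move=> hups hm ht hmt hmax.
have K0 : (0 < ups * tau)%N by case: hups => ->; rewrite ?mul1n ?mul2n ?double_gt0.
have hv : (ups = 1 /\ varsigma ups m = 2 * m \/ ups = 2 /\ m = 1 /\ varsigma ups m = 1)%N.
  move: hmt; case: hups => -> hmt; [left|right] => //; split => //.
  split => //; case: hmt => // h; lia.
set a := (size f).-1; set b := (size g).-1.
have pos_of : forall x : nat, (0 < tau * x)%N -> (0 < x)%N by move=> x; rewrite muln_gt0 => /andP[].
have [hab|hab] := leP (a%:R / 2 : rat) (b%:R / 3).
- rewrite max_r // in hmax.
  have h1 := frac_eq (isT : (0 < 3)%N) K0 hmax.
  have : (a%:R / 2%:R <= (2 * m)%:R / (ups * tau)%:R :> rat) by rewrite -hmax.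
  rewrite frac_le // => h2.
  move: h1 h2; rewrite !(mulnC _ (ups * tau)) -!mulnA.
  case: hv => [[-> ->]|[-> [-> ->]]] => h1 h2.
  + have hb : (0 < b)%N by apply: pos_of; lia.
    split; [lia|lia|right; split; [lia|exact: hb]].
  + have hb : (0 < b)%N by apply: pos_of; lia.
    split; [lia|lia|right; split; [lia|exact: hb]].
- rewrite max_l ?ltW // in hmax.
  have h1 := frac_eq (isT : (0 < 2)%N) K0 hmax.
  have : (b%:R / 3%:R <= (2 * m)%:R / (ups * tau)%:R :> rat) by rewrite -hmax ltW.
  rewrite frac_le // => h2.
  move: h1 h2; rewrite !(mulnC _ (ups * tau)) -!mulnA.
  case: hv => [[-> ->]|[-> [-> ->]]] => h1 h2.
  + have ha : (0 < a)%N by apply: pos_of; lia.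
    split; [lia|lia|left; split; [lia|exact: ha]].
  + have ha : (0 < a)%N by apply: pos_of; lia.
    split; [lia|lia|left; split; [lia|exact: ha]].
Qed.

Implicit Types (p : {poly int}) (P S : {poly {poly int}}).

Lemma polyQ_inj : injective polyQ.
Proof. apply: map_inj_poly; [exact: intr_inj | by []]. Qed.

Lemma size_polyQ p : size (polyQ p) = size p.
Proof. apply: size_map_inj_poly; [exact: intr_inj | by []]. Qed.

Lemma polyQ_eq0 p : (polyQ p == 0) = (p == 0).
Proof. by rewrite -!size_poly_eq0 size_polyQ. Qed.

Lemma size_poly2Q P : size (poly2Q P) = size P.
Proof. apply: size_map_inj_poly; [exact: polyQ_inj | by rewrite /polyQ map_poly0]. Qed.

Lemma coef_poly2Q P i : (poly2Q P)`_i = polyQ P`_i.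
Proof. by rewrite coef_map_id0 // /polyQ map_poly0. Qed.

Lemma totdeg2Q P : totdeg2 P = totdegQ (poly2Q P).
Proof.
rewrite /totdeg2 /totdegQ size_poly2Q; apply: eq_bigr => i _.
by rewrite coef_poly2Q polyQ_eq0 size_polyQ.
Qed.

Lemma lead_polyQ p : lead_coef (polyQ p) = (lead_coef p)%:~R.
Proof. apply: lead_coef_map_inj; [exact: intr_inj | by []]. Qed.

Lemma lead2Q P : (lead2 P)%:~R = lead_coef (lead_coef (poly2Q P)) :> rat.
Proof.
rewrite /lead2 lead_coef_map_inj ?lead_polyQ //; first exact: polyQ_inj.
by rewrite /polyQ map_poly0.
Qed.

Lemma poly2Q_homog p t w : poly2Q (homog p t w) = homQ (polyQ p) t w.
Proof.
apply/polyP => i; rewrite coef_poly2Q.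
change (homog p t w) with (homQ p t w).
rewrite !coef_homQ /polyQ map_polyZ map_polyXn coef_map //.
Qed.

Lemma polyQ_at_y1 S : polyQ (at_y1 S) = ev1 (poly2Q S).
Proof.
apply/polyP => i; rewrite /ev1 [in RHS]coef_map /= coef_poly2Q /at_y1 coef_map_id0 ?horner0 //.
rewrite /horner_eval /polyQ -[1 in RHS](rmorph1 intr) horner_map //.
by rewrite coef_map_id0 ?horner0.
Qed.

Lemma polyQX p e : polyQ (p ^+ e) = polyQ p ^+ e.
Proof. by rewrite /polyQ rmorphXn. Qed.

Lemma phiF p t w e : (t * (size p).-1 <= w)%N ->
  phi t (poly2Q (homog p t w ^+ e)) = ('X^(w * e))%:P * (polyQ p ^+ e)^:P.
Proof.
move=> hw.
have -> : poly2Q (homog p t w ^+ e) = poly2Q (homog p t w) ^+ e by rewrite /poly2Q rmorphXn.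
rewrite poly2Q_homog phiXn phi_homQ ?size_polyQ //.
by rewrite exprMn -!rmorphXn -exprM.
Qed.

Lemma bound_exp (p : {poly rat}) t w e : (t * (size p).-1 <= w)%N -> (t * (size (p ^+ e)).-1 <= w * e)%N.
Proof.
move=> h; have h1 := size_poly_exp_leq p e.
have h2 : ((size (p ^+ e)).-1 <= (size p).-1 * e)%N by move: h1; case: (size (p ^+ e)).
apply: leq_trans (_ : t * ((size p).-1 * e) <= w * e)%N.
  by rewrite leq_mul2l h2 orbT.
by rewrite mulnA leq_mul2r h orbT.
Qed.

Lemma dvd2_hom t (X : {poly {poly int}}) a (d : {poly int}) W :
  phi t (poly2Q X) = ('X^W)%:P * a^:P -> (t * (size a).-1 <= W)%N -> polyQ d %| a ->
  dvd2 (homog d t (t * (size d).-1)) X.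
Proof.
move=> hX hW hd.
have [a0|a0] := eqVneq a 0.
  exists 0; rewrite mul0r; apply: (@phi_inj _ t); rewrite hX a0 phi0.
  by rewrite map_poly0 mulr0.
have [r [_ _ _ hE]] := dvd_hom hX hW hd a0.
by exists (homQ r t (W - t * (size (polyQ d)).-1)); rewrite hE poly2Q_homog size_polyQ.
Qed.


Lemma ev0X (P : {poly {poly rat}}) e : ev0 (P ^+ e) = ev0 P ^+ e.
Proof. by rewrite /ev0 rmorphXn. Qed.

Lemma poly2QX (P : {poly {poly int}}) e : poly2Q (P ^+ e) = poly2Q P ^+ e.
Proof. by rewrite /poly2Q rmorphXn. Qed.

Lemma struct_int (p : {poly int}) t w e (S : {poly {poly int}}) :
  (t * (size p).-1)%N = w -> p != 0 -> dvd2 S (homog p t w ^+ e) ->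
  poly2Q S = homQ (ev1 (poly2Q S)) t (t * (size (ev1 (poly2Q S))).-1).
Proof.
move=> hw p0 [Q hQ].
have hphi := phiF e (eq_leq hw).
apply: (S_struct hphi _ hQ).
  by rewrite expf_neq0 // polyQ_eq0.
rewrite poly2QX poly2Q_homog ev0X expf_neq0 // -hw -(size_polyQ p) ev0_homQ_neq0 //.
by rewrite polyQ_eq0.
Qed.

Lemma ev1_dvd (p : {poly int}) t w e (S : {poly {poly int}}) :
  dvd2 S (homog p t w ^+ e) -> (t * (size p).-1 <= w)%N ->
  ev1 (poly2Q S) %| polyQ p ^+ e.
Proof.
move=> [Q hQ] hw.
have : ev1 (poly2Q (homog p t w ^+ e)) = polyQ p ^+ e.
  by rewrite -(ev1_phi t) phiF // ev1_mono.
by rewrite hQ ev1M => <-; apply: dvdp_mull.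
Qed.

Lemma td_ge (D S : {poly {poly int}}) T : poly2Q D = T * poly2Q S -> poly2Q D != 0 ->
  (totdeg2 S + (size T).-1 <= totdeg2 D)%N.
Proof.
move=> hD D0.
have T0 : T != 0 by apply: contraNneq D0 => T0; rewrite hD T0 mul0r.
have S0 : poly2Q S != 0 by apply: contraNneq D0 => S0; rewrite hD S0 mulr0.
rewrite !totdeg2Q hD totdegQ_mul // addnC leq_add2r totdegQ_lb //.
Qed.

Unset Implicit Arguments.
Theorem lemma2p2 (ups m tau : nat) (f g : {poly int}) (S : {poly {poly int}}) :
  (ups = 1 \/ ups = 2)%N ->
  (0 < m)%N -> (0 < tau)%N ->
  (m = 1 \/ ups * tau = 1)%N ->
  4%:R * f ^+ 3 + 27%:R * g ^+ 2 != 0 ->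
  (forall r : Rdefinitions.R,
     ~ (root (map_poly (fun z : int => z%:~R) f) r /\
        root (map_poly (fun z : int => z%:~R) g) r)) ->
  Num.max ((size f).-1%:R / 2 : rat) ((size g).-1%:R / 3) = (2 * m)%:R / (ups * tau)%:R ->
  is_gcd2 (homog f tau (2 * varsigma ups m) ^+ 3) (homog g tau (3 * varsigma ups m) ^+ 2) S ->
  is_gcd1 (f ^+ 3) (g ^+ 2) (at_y1 S).
Proof.
move=> hups hm ht hmt hdisc _ hmax [hS1 hS2 hmaxd hlead hmin].
have [hf hg hpf] := deg_facts hups hm ht hmt hmax.
move: hS1 hS2 hmaxd hmin hf hg hpf; set v := varsigma ups m => hS1 hS2 hmaxd hmin hf hg hpf.
set fQ := polyQ f; set gQ := polyQ g.
have bF : (tau * (size (fQ ^+ 3)).-1 <= 2 * v * 3)%N by apply: bound_exp; rewrite size_polyQ.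
have bG : (tau * (size (gQ ^+ 2)).-1 <= 3 * v * 2)%N by apply: bound_exp; rewrite size_polyQ.
have phF := phiF 3 hf.
have phG := phiF 2 hg.
have hSS : poly2Q S = homQ (ev1 (poly2Q S)) tau (tau * (size (ev1 (poly2Q S))).-1).
  case: hpf => [[h1 h2]|[h1 h2]].
  - by apply: (struct_int h1 _ hS1); rewrite -size_poly_eq0; move: h2; case: (size f).
  - by apply: (struct_int h1 _ hS2); rewrite -size_poly_eq0; move: h2; case: (size g).
have hsf := ev1_dvd hS1 hf.
have hsg := ev1_dvd hS2 hg.
have hs1 : polyQ (at_y1 S) = ev1 (poly2Q S) := polyQ_at_y1 S.
move: hSS hsf hsg hs1; set s := ev1 (poly2Q S) => hSS hsf hsg hs1.
set g0 := gcdp (fQ ^+ 3) (gQ ^+ 2).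
have g00 : g0 != 0.
  rewrite gcdp_eq0 !expf_eq0 /= !polyQ_eq0; apply: contra hdisc => /andP[/eqP -> /eqP ->].
  by rewrite !expr0n /= !mulr0 addr0.
have hsg0 : s %| g0 by rewrite dvdp_gcd hsf hsg.
have s0 : s != 0 by apply: contraNneq g00 => s0; move: hsg0; rewrite s0 dvd0p.
have hsize : size s = size g0.
  case: (rat_poly_scale g0) => d0 [c c0 hd0].
  have c0' : (c%:~R : rat) != 0 by rewrite intr_eq0.
  have hpd : polyQ d0 = c%:~R *: g0.
    by rewrite hd0 scalerA mulfV // scale1r.
  have hpdf : polyQ d0 %| fQ ^+ 3 by rewrite hpd dvdpZl // dvdp_gcdl.
  have hpdg : polyQ d0 %| gQ ^+ 2 by rewrite hpd dvdpZl // dvdp_gcdr.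
  have hD1 := dvd2_hom phF bF hpdf.
  have hD2 := dvd2_hom phG bG hpdg.
  have hle := hmaxd _ hD1 hD2.
  have pd0 : polyQ d0 != 0 by rewrite hpd scaler_eq0 negb_or c0' g00.
  have phD : phi tau (poly2Q (homog d0 tau (tau * (size d0).-1))) =
     ('X^(tau * (size (polyQ d0)).-1))%:P * (polyQ d0)^:P.
    by rewrite poly2Q_homog phi_homQ size_polyQ.
  have hspd : s %| polyQ d0 by rewrite hpd dvdpZr.
  have [r [hr r0 hrb hDr]] := dvd_hom phD (leqnn _) hspd pd0.
  rewrite -hSS in hDr.
  have D0 : poly2Q (homog d0 tau (tau * (size d0).-1)) != 0.
    by rewrite -size_poly_eq0 -(size_phi tau) phD size_mono size_poly_eq0.
  have hge := td_ge hDr D0.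
  rewrite size_homQ // in hge.
  have hr1 : size r = 1%N.
    move: r0; rewrite -size_poly_eq0; move: hle hge; case: (size r) => // [[|x]] //; lia.
  have : size (polyQ d0) = size g0 by rewrite hpd size_scale.
  by rewrite hr size_mul // hr1.
have hl : lead2 S = lead_coef (at_y1 S).
  apply: (@intr_inj rat); rewrite lead2Q hSS lead2_homQ -hs1 lead_polyQ //.
split.
- by rewrite hs1 polyQX.
- by rewrite hs1 polyQX.
- move=> d; rewrite !polyQX => hd1 hd2.
  have : polyQ d %| g0 by rewrite dvdp_gcd hd1 hd2.
  move/(dvdp_leq g00); rewrite size_polyQ -hsize -hs1 size_polyQ //.
- by rewrite -hl.
move=> d; rewrite !polyQX => hd1 hd2 hsz hpos.
have pdg : polyQ d %| g0 by rewrite dvdp_gcd hd1 hd2.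
have hszQ : size (polyQ d) = size g0 by rewrite size_polyQ hsz -size_polyQ hs1 hsize.
have e1 : polyQ d %= g0 by rewrite -dvdp_size_eqp // hszQ.
have e2 : s %= g0 by rewrite -dvdp_size_eqp // hsize.
have hsd : s %| polyQ d by rewrite (eqp_dvdl _ e2) (eqp_dvdr _ e1) dvdpp.
have h1 := dvd2_hom phF bF hd1.
have h2 := dvd2_hom phG bG hd2.
have hle := hmaxd _ h1 h2.
have pd0 : polyQ d != 0 by rewrite polyQ_eq0 -lead_coef_eq0 lt0r_neq0.
have phD : phi tau (poly2Q (homog d tau (tau * (size d).-1))) =
   ('X^(tau * (size (polyQ d)).-1))%:P * (polyQ d)^:P.
  by rewrite poly2Q_homog phi_homQ size_polyQ.
have [r [hr r0 hrb hDr]] := dvd_hom phD (leqnn _) hsd pd0.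
rewrite -hSS in hDr.
have D0 : poly2Q (homog d tau (tau * (size d).-1)) != 0.
  by rewrite -size_poly_eq0 -(size_phi tau) phD size_mono size_poly_eq0.
have hge := td_ge hDr D0.
have htd : totdeg2 (homog d tau (tau * (size d).-1)) = totdeg2 S.
  by apply/eqP; rewrite eqn_leq hle (leq_trans (leq_addr _ _) hge).
have hld : lead2 (homog d tau (tau * (size d).-1)) = lead_coef d.
  apply: (@intr_inj rat); rewrite lead2Q poly2Q_homog -(size_polyQ d) lead2_homQ lead_polyQ //.
rewrite -hl -hld; apply: hmin => //; rewrite hld //.
Qed.
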